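(* Let $\mathrm{M}=\langle e_1+I,\ e_2+I\rangle$ and $\Lambda=\langle e_1+I,\ e_1/2+\sqrt3 e_2/2+I\rangle$, where $e_1,e_2$ are the standard basis vectors of $E^2$. Let $\mathrm{K}=\{(a+I)_\star : a\in E^2\}\subseteq \mathrm{Aff}(\mathrm{M})$ and let $$A=\begin{pmatrix}-1&0\\0&1\end{pmatrix},\ B=\begin{pmatrix}-1&1\\0&1\end{pmatrix},\ C=\begin{pmatrix}0&1\\1&0\end{pmatrix},\ D=\begin{pmatrix}1&-1/2\\0&\sqrt3/2\end{pmatrix}.$$ Then $\mathrm{Sym}(\mathrm{M})=\langle \mathrm{K}, A_\star, C_\star\rangle$, $D\mathrm{M}D^{-1}=\Lambda$, the map $D_\sharp:\mathrm{Aff}(\mathrm{M})\to\mathrm{Aff}(\Lambda)$ is an isomorphism, and $\mathrm{Sym}(\Lambda)=D_\sharp(\langle \mathrm{K}, B_\star, C_\star\rangle)$.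
   Context: Affine maps of $E^2$ are written $a+A$ (meaning $x\mapsto a+Ax$); $a+I$ is translation by $a$. For a 2-space group $\mathrm{M}$ (a discrete group of isometries of $E^2$ with compact quotient), let $N_A(\mathrm{M})$ be its normalizer in the affine group of $E^2$. Each $a+A\in N_A(\mathrm{M})$ induces an affinity $(a+A)_\star:\mathrm{M}x\mapsto\mathrm{M}(a+Ax)$ of the flat orbifold $E^2/\mathrm{M}$; $\mathrm{Aff}(\mathrm{M})$ is the group of all such affinities, and $\mathrm{Sym}(\mathrm{M})=\mathrm{Isom}(E^2/\mathrm{M})$ is its subgroup of isometries of the flat orbifold $E^2/\mathrm{M}$. For an affine map $\phi$ with $\phi\mathrm{M}\phi^{-1}=\Lambda$, $\phi_\sharp:\mathrm{Aff}(\mathrm{M})\to\mathrm{Aff}(\Lambda)$ is defined by $\phi_\sharp((a+A)_\star)=(\phi(a+A)\phi^{-1})_\star$. Here $E^2/\mathrm{M}$ is the square torus and $E^2/\Lambda$ the hexagonal torus. *)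

(* Defs.v *)
From HB Require Import structures.
From mathcomp Require Import all_boot all_order all_algebra.
From mathcomp Require Import classical_sets reals.
Set Implicit Arguments. Unset Strict Implicit. Unset Printing Implicit Defensive.
Import Order.TTheory GRing.Theory Num.Theory.
Local Open Scope ring_scope.
Local Open Scope classical_set_scope.

Section Affine.
Variable R : realType.

Definition vec := 'cV[R]_2.

Record aff := Aff { tr : vec ; lin : 'M[R]_2 }.

Definition app (f : aff) (x : vec) : vec := tr f + lin f *m x.
Definition acomp (f g : aff) : aff := Aff (tr f + lin f *m tr g) (lin f *m lin g).
Definition aid : aff := Aff 0 1%:M.
Definition ainv (f : aff) : aff := Aff (- (invmx (lin f) *m tr f)) (invmx (lin f)).
Definition transl (a : vec) : aff := Aff a 1%:M.
Definition linaff (A : 'M[R]_2) : aff := Aff 0 A.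
Definition is_affine (f : aff) : Prop := lin f \in unitmx.

Definition vec2 (x y : R) : vec := \col_(i < 2) (if i == 0 then x else y).
Definition mx2 (a b c d : R) : 'M[R]_2 :=
  \matrix_(i < 2, j < 2) (if i == 0 then (if j == 0 then a else b)
                          else (if j == 0 then c else d)).

Inductive gen_group (S : set aff) : aff -> Prop :=
| gg_base f : S f -> gen_group S f
| gg_one : gen_group S aid
| gg_comp f g : gen_group S f -> gen_group S g -> gen_group S (acomp f g)
| gg_inv f : gen_group S f -> gen_group S (ainv f).

Definition conj_eq (phi : aff) (G H : set aff) : Prop :=
  (forall g, G g -> H (acomp phi (acomp g (ainv phi)))) /\
  (forall h, H h -> exists2 g, G g & h = acomp phi (acomp g (ainv phi))).

Definition normA (G : set aff) : set aff :=
  [set phi | is_affine phi /\ conj_eq phi G G].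

Definition orbit (G : set aff) (x : vec) : set vec := [set app g x | g in G].

(* phi_* = psi_* as affinities of E^2/G:  G(phi x) = G(psi x) for all x *)
Definition star_eq (G : set aff) (phi psi : aff) : Prop :=
  forall x, orbit G (app phi x) = orbit G (app psi x).

(* Elements of Aff(G) are represented by elements of normA G modulo star_eq.
   The subgroup of Aff(G) generated by the affinities f_* (f in S), pulled
   back to normA G (i.e. the set of representatives of its elements). *)
Inductive gen_Aff (G : set aff) (S : set aff) : aff -> Prop :=
| ga_base f : S f -> normA G f -> gen_Aff G S f
| ga_one : gen_Aff G S aid
| ga_comp f g : gen_Aff G S f -> gen_Aff G S g -> gen_Aff G S (acomp f g)
| ga_inv f : gen_Aff G S f -> gen_Aff G S (ainv f)
| ga_eq f g : gen_Aff G S f -> normA G g -> star_eq G f g -> gen_Aff G S g.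

Definition edist (x y : vec) : R :=
  Num.sqrt ((x - y) 0 0 ^+ 2 + (x - y) 1 0 ^+ 2).

(* distance of the flat orbifold E^2/G between Gx and Gy *)
Definition orbdist (G : set aff) (x y : vec) : R :=
  inf [set edist x (app g y) | g in G].

(* phi_* is an isometry of E^2/G (phi_* is a bijection, being an affinity) *)
Definition star_isometry (G : set aff) (phi : aff) : Prop :=
  forall x y, orbdist G (app phi x) (app phi y) = orbdist G x y.

Definition in_Sym (G : set aff) (phi : aff) : Prop :=
  normA G phi /\ star_isometry G phi.

Definition e1 : vec := vec2 1 0.
Definition e2 : vec := vec2 0 1.
Definition Mgrp : set aff := gen_group [set transl e1; transl e2].
Definition Lgrp : set aff :=
  gen_group [set transl e1; transl (vec2 (1/2) (Num.sqrt 3 / 2))].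

Definition Kset : set aff := [set transl a | a in [set: vec]].

Definition Amx : 'M[R]_2 := mx2 (-1) 0 0 1.
Definition Bmx : 'M[R]_2 := mx2 (-1) 1 0 1.
Definition Cmx : 'M[R]_2 := mx2 0 1 1 0.
Definition Dmx : 'M[R]_2 := mx2 1 (-1/2) 0 (Num.sqrt 3 / 2).

Definition Daff : aff := linaff Dmx.
(* D_sharp on representatives *)
Definition Dsharp (phi : aff) : aff := acomp Daff (acomp phi (ainv Daff)).

End Affine.

Arguments Mgrp R : clear implicits.
Arguments Lgrp R : clear implicits.
Arguments Kset R : clear implicits.
Arguments Amx R : clear implicits.
Arguments Bmx R : clear implicits.
Arguments Cmx R : clear implicits.
Arguments Dmx R : clear implicits.
Arguments Daff R : clear implicits.

(* Main.v *)
Require Import Defs.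
From HB Require Import structures.
From mathcomp Require Import all_boot all_order all_algebra.
From mathcomp Require Import boolp classical_sets reals.
From mathcomp Require Import zify ring lra.
Import Order.TTheory GRing.Theory Num.Theory.
Local Open Scope ring_scope.
Local Open Scope classical_set_scope.
Set Implicit Arguments. Unset Strict Implicit. Unset Printing Implicit Defensive.
Section S. Variable R : realType.
Local Notation vec := (vec R).
Local Notation aff := (aff R).
Implicit Types (a b u v w x y : vec) (P Q : 'M[R]_2) (f g : aff).

Lemma ord2P (i : 'I_2) : i = 0 \/ i = 1.
Proof. case: i => [[|[|i]] Hi]; [left|right|by []]; exact: val_inj. Qed.

Lemma vec2E00 (x y : R) : vec2 x y 0 0 = x. Proof. by rewrite mxE. Qed.
Lemma vec2E10 (x y : R) : vec2 x y 1 0 = y. Proof. by rewrite mxE. Qed.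
Lemma mx2E00 (a b c d : R) : mx2 a b c d 0 0 = a. Proof. by rewrite mxE. Qed.
Lemma mx2E01 (a b c d : R) : mx2 a b c d 0 1 = b. Proof. by rewrite mxE. Qed.
Lemma mx2E10 (a b c d : R) : mx2 a b c d 1 0 = c. Proof. by rewrite mxE. Qed.
Lemma mx2E11 (a b c d : R) : mx2 a b c d 1 1 = d. Proof. by rewrite mxE. Qed.
Definition mxEs := (vec2E00, vec2E10, mx2E00, mx2E01, mx2E10, mx2E11).

Lemma vecP u v : u 0 0 = v 0 0 -> u 1 0 = v 1 0 -> u = v.
Proof.
move=> h0 h1; apply/matrixP => i j; rewrite (ord1 j).
by case: (ord2P i) => ->.
Qed.

Lemma mxP2 P Q : P 0 0 = Q 0 0 -> P 0 1 = Q 0 1 -> P 1 0 = Q 1 0 -> P 1 1 = Q 1 1 -> P = Q.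
Proof.
move=> h1 h2 h3 h4; apply/matrixP => i j.
by case: (ord2P i) => ->; case: (ord2P j) => ->.
Qed.

Lemma vec_eta u : u = vec2 (u 0 0) (u 1 0).
Proof. by apply: vecP; rewrite !mxE. Qed.
Lemma mx_eta P : P = mx2 (P 0 0) (P 0 1) (P 1 0) (P 1 1).
Proof. by apply: mxP2; rewrite !mxE. Qed.

Lemma sum2 (F : 'I_2 -> R) : \sum_(k < 2) F k = F 0 + F 1.
Proof. by rewrite big_ord_recl big_ord1; congr (_ + F _); apply: val_inj. Qed.

Lemma mx2_vec2 (a b c d x y : R) :
  mx2 a b c d *m vec2 x y = vec2 (a * x + b * y) (c * x + d * y).
Proof. by apply: vecP; rewrite !mxE sum2 !mxEs. Qed.

Lemma mx2_mul (a b c d a' b' c' d' : R) :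
  mx2 a b c d *m mx2 a' b' c' d' =
  mx2 (a * a' + b * c') (a * b' + b * d') (c * a' + d * c') (c * b' + d * d').
Proof. by apply: mxP2; rewrite !mxE sum2 !mxEs. Qed.

Lemma vec2D (x y x' y' : R) : vec2 x y + vec2 x' y' = vec2 (x + x') (y + y').
Proof. by apply: vecP; rewrite !mxE. Qed.
Lemma vec2N (x y : R) : - vec2 x y = vec2 (- x) (- y).
Proof. by apply: vecP; rewrite !mxE. Qed.
Lemma vec2Z (t x y : R) : t *: vec2 x y = vec2 (t * x) (t * y).
Proof. by apply: vecP; rewrite !mxE. Qed.
Lemma vec20 : 0 = vec2 0 0 :> vec.
Proof. by apply: vecP; rewrite !mxE. Qed.
Lemma mx21 : 1%:M = mx2 1 0 0 1 :> 'M[R]_2.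
Proof. by apply: mxP2; rewrite !mxE. Qed.

Lemma app_transl a x : app (transl a) x = a + x.
Proof. by rewrite /app /= mul1mx. Qed.
Lemma app_linaff P x : app (linaff P) x = P *m x.
Proof. by rewrite /app /= add0r. Qed.
Lemma app_acomp f g x : app (acomp f g) x = app f (app g x).
Proof. by rewrite /app /= mulmxDr mulmxA addrA. Qed.
Lemma app_ainvK f x : lin f \in unitmx -> app (ainv f) (app f x) = x.
Proof.
by move=> u; rewrite /app /= mulmxDr mulmxA mulVmx // mul1mx addrA addNr add0r.
Qed.
Lemma app_ainvVK f x : lin f \in unitmx -> app f (app (ainv f) x) = x.
Proof.
move=> u; rewrite /app /= mulmxDr mulmxN mulmxA mulmxV // mul1mx.
by rewrite mulmxA mulmxV // mul1mx addrA addrN add0r.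
Qed.
Lemma acomp_transl a b : acomp (transl a) (transl b) = transl (a + b).
Proof. by rewrite /acomp /transl /= !mul1mx. Qed.
Lemma ainv_transl a : ainv (transl a) = transl (- a).
Proof. by rewrite /ainv /transl /= invmx1 mul1mx. Qed.
Lemma transl_inj a b : transl a = transl b -> a = b.
Proof. by case. Qed.
Lemma conj_transl f a : lin f \in unitmx ->
  acomp f (acomp (transl a) (ainv f)) = transl (lin f *m a).
Proof.
case: f => b P /= u; rewrite /acomp /transl /ainv /=; congr Aff.
  by rewrite mul1mx mulmxDr mulmxN mulmxA mulmxV // mul1mx addrC subrK.
by rewrite mul1mx mulmxV.
Qed.
Lemma acomp_linaff P Q : acomp (linaff P) (linaff Q) = linaff (P *m Q).
Proof. by rewrite /acomp /linaff /= mulmx0 addr0. Qed.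

Lemma star_eq_app G f g : (forall x, app f x = app g x) -> star_eq G f g.
Proof. by move=> h x; rewrite h. Qed.

Definition TG (L : set vec) : set aff := [set transl a | a in L].
Definition latc (L : set vec) := L 0 /\ (forall a b, L a -> L b -> L (a + b))
  /\ (forall a, L a -> L (- a)).

Definition Lat u v : set vec := [set w | exists m n, m \is a Num.int /\
   n \is a Num.int /\ w = m *: u + n *: v].

Lemma gen_transl_nat u v (n : nat) : gen_group [set transl u; transl v] (transl (n%:R *: u)).
Proof.
elim: n => [|n IH]; first by rewrite scale0r; exact: gg_one.
rewrite mulrS scalerDl scale1r -acomp_transl.
by apply: gg_comp => //; apply: gg_base; left.
Qed.

Lemma gen_transl_int u v (m : R) : m \is a Num.int ->
  gen_group [set transl u; transl v] (transl (m *: u)).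
Proof.
case/intrP=> k ->; case: k => n.
  exact: gen_transl_nat.
rewrite NegzE mulrNz scaleNr -ainv_transl; apply: gg_inv.
exact: gen_transl_nat.
Qed.

Lemma gen_transl_nat2 u v (n : nat) : gen_group [set transl u; transl v] (transl (n%:R *: v)).
Proof.
elim: n => [|n IH]; first by rewrite scale0r; exact: gg_one.
rewrite mulrS scalerDl scale1r -acomp_transl.
by apply: gg_comp => //; apply: gg_base; right.
Qed.

Lemma gen_transl_int2 u v (m : R) : m \is a Num.int ->
  gen_group [set transl u; transl v] (transl (m *: v)).
Proof.
case/intrP=> k ->; case: k => n.
  exact: gen_transl_nat2.
rewrite NegzE mulrNz scaleNr -ainv_transl; apply: gg_inv.
exact: gen_transl_nat2.
Qed.

Lemma gen_transl u v : gen_group [set transl u; transl v] = TG (Lat u v).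
Proof.
apply/funext => f; apply/propext; split.
- elim => {f} [f [->|->]| |f g _ [a [m [n [hm [hn ->]]]] <-] _ [b [m' [n' [hm' [hn' ->]]]] <-]
              |f _ [a [m [n [hm [hn ->]]]] <-]].
  + exists u => //; exists 1, 0; by rewrite rpred1 rpred0 scale1r scale0r addr0.
  + exists v => //; exists 0, 1; by rewrite rpred1 rpred0 scale1r scale0r add0r.
  + exists 0 => //; exists 0, 0; by rewrite rpred0 !scale0r addr0.
  + rewrite acomp_transl; eexists => //; exists (m + m'), (n + n').
    by rewrite !rpredD // !scalerDl addrACA.
  + rewrite ainv_transl; eexists => //; exists (- m), (- n).
    by rewrite !rpredN // !scaleNr opprD.
- case=> _ [m [n [hm [hn ->]]]] <-.
  rewrite -acomp_transl; apply: gg_comp.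
  exact: gen_transl_int. exact: gen_transl_int2.
Qed.

Lemma orbit_TG L x : Defs.orbit (TG L) x = [set a + x | a in L].
Proof.
apply/funext => y; apply/propext; split.
  by case=> _ [a La <-] <-; exists a => //; rewrite app_transl.
by case=> a La <-; exists (transl a); [exists a | rewrite app_transl].
Qed.

Lemma star_eq_TG L f g : latc L ->
  (star_eq (TG L) f g <-> forall x, L (app f x - app g x)).
Proof.
move=> [L0 [LD LN]]; split => h x.
  have : Defs.orbit (TG L) (app f x) (app f x).
    by rewrite orbit_TG; exists 0 => //; rewrite add0r.
  rewrite h orbit_TG; case=> a La <-.
  by rewrite addrK.
rewrite !orbit_TG; apply/funext => y; apply/propext; split.
  case=> a La <-; exists (a + (app f x - app g x)); first exact: LD.
  by rewrite -addrA subrK.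
case=> a La <-; exists (a - (app f x - app g x)); first by apply: LD => //; exact: LN.
by rewrite opprB -addrA subrK.
Qed.

Lemma normA_TG L f : normA (TG L) f <->
  [/\ lin f \in unitmx, (forall a, L a -> L (lin f *m a)) &
      (forall a, L a -> exists2 a', L a' & a = lin f *m a')].
Proof.
split.
  case=> u [h1 h2]; split => // a La.
    have := h1 (transl a) (ex_intro2 _ _ a La erefl).
    by rewrite conj_transl //; case=> b Lb /transl_inj <-.
  have [g [a' La' <-]] := h2 (transl a) (ex_intro2 _ _ a La erefl).
  by rewrite conj_transl // => /transl_inj ->; exists a'.
case=> u h1 h2; split => //; split.
  by move=> g [a La <-]; rewrite conj_transl //; exists (lin f *m a) => //; apply: h1.
move=> h [a La <-]; have [a' La' ->] := h2 a La.
by exists (transl a'); [exists a' | rewrite conj_transl].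
Qed.

Definition Zv : set vec := [set w | w 0 0 \is a Num.int /\ w 1 0 \is a Num.int].
Definition LL : set vec := [set Dmx R *m z | z in Zv].

Lemma Zv2 (m n : R) : Zv (vec2 m n) <-> m \is a Num.int /\ n \is a Num.int.
Proof. by rewrite /Zv /= !mxE. Qed.

Lemma latc_Zv : latc Zv.
Proof.
split; first by rewrite /Zv /= !mxE rpred0.
split.
  by move=> a b [h1 h2] [h3 h4]; rewrite /Zv /= !mxE !rpredD.
by move=> a [h1 h2]; rewrite /Zv /= !mxE !rpredN.
Qed.

Lemma latc_LL : latc LL.
Proof.
have [Z0 [ZD ZN]] := latc_Zv.
split; first by exists 0 => //; rewrite mulmx0.
split.
  by move=> _ _ [a La <-] [b Lb <-]; exists (a + b); [exact: ZD | rewrite mulmxDr].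
by move=> _ [a La <-]; exists (- a); [exact: ZN | rewrite mulmxN].
Qed.

Lemma D_vec2 (p q : R) :
  Dmx R *m vec2 p q = vec2 (p - q / 2) (Num.sqrt 3 / 2 * q).
Proof. by rewrite /Dmx mx2_vec2; congr vec2; field. Qed.

Lemma Mgrp_TG : Mgrp R = TG Zv.
Proof.
rewrite /Mgrp gen_transl; congr TG; apply/funext => w; apply/propext; split.
  case=> m [n [hm [hn ->]]].
  rewrite /e1 /e2 !vec2Z vec2D Zv2 !mulr1 !mulr0 addr0 add0r; done.
case=> h1 h2; exists (w 0 0), (w 1 0); split => //; split => //.
by rewrite /e1 /e2 !vec2Z vec2D !mulr1 !mulr0 addr0 add0r -vec_eta.
Qed.

Lemma Lgrp_TG : Lgrp R = TG LL.
Proof.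
rewrite /Lgrp gen_transl; congr TG; apply/funext => w; apply/propext; split.
  case=> m [n [hm [hn ->]]].
  exists (vec2 (m + n) n); first by rewrite Zv2 rpredD.
  by rewrite D_vec2 /e1 !vec2Z vec2D; congr vec2; field.
case=> z [h1 h2] <-; exists (z 0 0 - z 1 0), (z 1 0); split; first exact: rpredB.
split => //.
have -> : Dmx R *m z = Dmx R *m vec2 (z 0 0) (z 1 0) by rewrite -vec_eta.
by rewrite D_vec2 /e1 !vec2Z vec2D; congr vec2; field.
Qed.

Definition nrm2 (w : vec) : R := w 0 0 ^+ 2 + w 1 0 ^+ 2.
Lemma nrm2_ge0 w : 0 <= nrm2 w.
Proof. by rewrite /nrm2 addr_ge0 ?sqr_ge0. Qed.
Lemma nrm2_vec2 (p q : R) : nrm2 (vec2 p q) = p ^+ 2 + q ^+ 2.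
Proof. by rewrite /nrm2 !mxE. Qed.
Lemma nrm2Z (t : R) w : nrm2 (t *: w) = t ^+ 2 * nrm2 w.
Proof. rewrite /nrm2 !mxE; ring. Qed.
Lemma nrm2_D (p q : R) : nrm2 (Dmx R *m vec2 p q) = p ^+ 2 - p * q + q ^+ 2.
Proof.
have hs : Num.sqrt 3 ^+ 2 = 3 :> R by rewrite sqr_sqrtr.
rewrite D_vec2 nrm2_vec2 !exprMn hs.
by field.
Qed.

Definition minnorm (L : set vec) := forall a, L a -> a <> 0 -> 1 <= nrm2 a.

Lemma key (w0 w1 a0 a1 : R) : w0^+2 + w1^+2 <= 1/16 -> 1 <= a0^+2 + a1^+2 ->
  w0^+2 + w1^+2 <= (w0 - a0)^+2 + (w1 - a1)^+2.
Proof.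
move=> h1 h2.
have s1 : 0 <= (2 * w0 - a0 / 2) ^+ 2 by apply: sqr_ge0.
have s2 : 0 <= (2 * w1 - a1 / 2) ^+ 2 by apply: sqr_ge0.
nra.
Qed.

Lemma tpick (a b : R) : 0 <= a -> 0 <= b ->
  exists t : R, 0 < t /\ t^+2 * a <= 1/16 /\ t^+2 * b <= 1/16.
Proof.
move=> ha hb; set k := 4 * (1 + a + b).
have kp : 0 < k by rewrite /k; lra.
exists k^-1; set t := k^-1.
have tp : 0 < t by rewrite invr_gt0.
have tk : t * k = 1 by rewrite mulVf // gt_eqF.
have t1 : t <= 1/4 by rewrite /k in tk; nra.
have ta : t * a <= 1/4 by rewrite /k in tk; nra.
have tb : t * b <= 1/4 by rewrite /k in tk; nra.
split => //; split; nra.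
Qed.

Lemma orbdist_TG L x y :
  orbdist (TG L) x y = inf [set Num.sqrt (nrm2 (x - (a + y))) | a in L].
Proof.
rewrite /orbdist; congr inf; apply/funext => r; apply/propext; split.
  by case=> _ [a La <-] <-; exists a => //; rewrite app_transl.
by case=> a La <-; exists (transl a); [exists a | rewrite app_transl].
Qed.

Lemma orbdist_small L x y : latc L -> minnorm L -> nrm2 (x - y) <= 1/16 ->
  orbdist (TG L) x y = Num.sqrt (nrm2 (x - y)).
Proof.
move=> [L0 _] mn hs; rewrite orbdist_TG.
set S := [set _ | _ in _]; set m := Num.sqrt _.
have mS : S m by exists 0 => //; rewrite add0r.
have lb : lbound S m.
  move=> _ [a La <-]; rewrite ler_sqrt ?nrm2_ge0 //.
  have [->|an0] := eqVneq a 0; first by rewrite add0r.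
  have := mn a La (elimN eqP an0); move: hs; rewrite /nrm2 !mxE => h1 h2.
  have := key h1 h2; congr (_ <= _ + _); congr (_ ^+ 2); ring.
apply/le_anti/andP; split.
  by apply: (ge_inf (ex_intro _ m lb)).
by apply: lb_le_inf => //; exists m.
Qed.

Lemma app_diff f x y : app f x - app f y = lin f *m (x - y).
Proof. by rewrite /app mulmxBr opprD addrACA addrN add0r. Qed.

Lemma iso_star L f : latc L -> (forall w, nrm2 (lin f *m w) = nrm2 w) ->
  normA (TG L) f -> star_isometry (TG L) f.
Proof.
move=> _ iso /normA_TG [u h1 h2] x y; rewrite !orbdist_TG; congr inf.
have E v : app f x - (lin f *m v + app f y) = lin f *m (x - (v + y)).
  by rewrite opprD addrCA app_diff -mulmxN -mulmxDr addrCA opprD.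
apply/funext => r; apply/propext; split.
  case=> a La <-; have [a' La' ->] := h2 a La.
  by exists a' => //; rewrite E iso.
by case=> a La <-; exists (lin f *m a); [exact: h1 | rewrite E iso].
Qed.

Lemma star_iso L f : latc L -> minnorm L -> star_isometry (TG L) f ->
  forall w, nrm2 (lin f *m w) = nrm2 w.
Proof.
move=> lc mn si.
have small w : nrm2 w <= 1/16 -> nrm2 (lin f *m w) <= 1/16 ->
    nrm2 (lin f *m w) = nrm2 w.
  move=> h1 h2; have := si w 0.
  rewrite (orbdist_small lc mn) ?app_diff ?subr0 //.
  rewrite (orbdist_small lc mn) ?subr0 // => /eqP.
  by rewrite eqr_sqrt ?nrm2_ge0 // => /eqP.
move=> w; have [t [tp [h1 h2]]] := tpick (nrm2_ge0 w) (nrm2_ge0 (lin f *m w)).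
have := small (t *: w); rewrite -scalemxAr !nrm2Z => /(_ h1 h2).
by apply: mulfI; rewrite expf_neq0 // gt_eqF.
Qed.

Lemma half_not_int : ~ ((1/2 : R) \is a Num.int).
Proof.
case/intrP => k hk.
have : (1%:~R : R) = (k + k)%:~R by rewrite intrD -hk; field.
move/intr_inj; lia.
Qed.

Lemma Zv_ints w : Zv w -> exists k l : int, w = vec2 k%:~R l%:~R.
Proof.
case=> /intrP [k hk] /intrP [l hl]; exists k, l.
by rewrite [w]vec_eta hk hl.
Qed.

Lemma minnorm_Zv : minnorm Zv.
Proof.
move=> a /Zv_ints [k [l ->]] nz; rewrite nrm2_vec2.
have : (k != 0 \/ l != 0)%R.
  case: (eqVneq k 0) => [ek|]; last by left.
  case: (eqVneq l 0) => [el|]; last by right.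
  by exfalso; apply: nz; rewrite ek el vec20.
move=> h; have : (1 <= k * k + l * l)%R by nia.
by rewrite !expr2 -!intrM -intrD ler1z.
Qed.

Lemma minnorm_LL : minnorm LL.
Proof.
move=> _ [z /Zv_ints [k [l ->]] <-] nz; rewrite nrm2_D.
have : (k != 0 \/ l != 0)%R.
  case: (eqVneq k 0) => [ek|]; last by left.
  case: (eqVneq l 0) => [el|]; last by right.
  by exfalso; apply: nz; rewrite ek el -vec20 mulmx0.
move=> h; have : (1 <= k * k - k * l + l * l)%R by nia.
by rewrite !expr2 -!intrM -intrB -intrD ler1z.
Qed.

Lemma lin_eq_gen (U P Q : 'M[R]_2) : U \in unitmx ->
  (forall x, exists2 z, Zv z & (P - Q) *m x = U *m z) -> P = Q.
Proof.
move=> u h; set W := invmx U *m (P - Q).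
have hW x : Zv (W *m x).
  by have [z Zz e] := h x; rewrite /W -mulmxA e mulKmx.
have W0 : W = 0.
  apply/matrixP => i j; rewrite [RHS]mxE; apply/eqP/negPn/negP => nz.
  set c := (2 * W i j)^-1.
  have : (c *: col j W) i 0 \is a Num.int.
    have := hW (c *: delta_mx j 0); rewrite -scalemxAr -colE.
    by case=> h0 h1; case: (ord2P i) => ->.
  rewrite mxE [X in c * X]mxE.
  have -> : c * W i j = 1 / 2 by rewrite /c; field.
  exact: half_not_int.
have : U *m W = P - Q by rewrite /W mulKVmx.
by rewrite W0 mulmx0 => /esym/subr0_eq.
Qed.

Lemma zl (V : zmodType) (a b X Y : V) : (a + X - (b + Y)) - (a - b) = X - Y.
Proof. by rewrite opprB addrC !addrA subrK opprD addrACA addrN add0r. Qed.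

Lemma lin_diff f g x :
  (lin f - lin g) *m x = (app f x - app g x) - (app f 0 - app g 0).
Proof.
rewrite /app !mulmx0 !addr0 mulmxBl.
by rewrite zl.
Qed.

Lemma star_eq_lin_M f g : star_eq (TG Zv) f g -> lin f = lin g.
Proof.
move/(star_eq_TG _ _ latc_Zv) => h; apply: (@lin_eq_gen 1%:M) => [|x].
  exact: unitmx1.
have [_ [ZD ZN]] := latc_Zv.
exists ((app f x - app g x) - (app f 0 - app g 0)); last by rewrite mul1mx lin_diff.
by apply: ZD; [exact: h | apply: ZN; exact: h].
Qed.

Lemma Dunit : Dmx R \in unitmx.
Proof.
have s0 : Num.sqrt 3 != 0 :> R by rewrite sqrtr_eq0 -ltNge.
have : Dmx R *m mx2 1 (1 / Num.sqrt 3) 0 (2 / Num.sqrt 3) = 1%:M.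
  by rewrite /Dmx mx2_mul mx21; congr mx2; field.
by case/mulmx1_unit.
Qed.

Lemma star_eq_lin_L f g : star_eq (TG LL) f g -> lin f = lin g.
Proof.
move/(star_eq_TG _ _ latc_LL) => h; apply: (lin_eq_gen Dunit) => x.
have [_ [LD LN]] := latc_LL.
have : LL ((app f x - app g x) - (app f 0 - app g 0)).
  by apply: LD; [exact: h | apply: LN; exact: h].
by case=> z Zz e; exists z => //; rewrite lin_diff e.
Qed.

Lemma normA_comp L f g : normA (TG L) f -> normA (TG L) g -> normA (TG L) (acomp f g).
Proof.
move=> /normA_TG [u1 p1 s1] /normA_TG [u2 p2 s2]; apply/normA_TG => /=; split.
- by rewrite unitmx_mul u1 u2.
- by move=> a La; rewrite -mulmxA; apply: p1; apply: p2.
- move=> a La; have [b Lb ->] := s1 a La; have [c Lc ->] := s2 b Lb.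
  by exists c => //; rewrite mulmxA.
Qed.

Lemma normA_inv L f : normA (TG L) f -> normA (TG L) (ainv f).
Proof.
move=> /normA_TG [u p s]; apply/normA_TG => /=; split.
- by rewrite unitmx_inv.
- by move=> a La; have [b Lb ->] := s a La; rewrite mulKmx.
- by move=> a La; exists (lin f *m a); [exact: p | rewrite mulKmx].
Qed.

Lemma normA_transl L a : normA (TG L) (transl a).
Proof.
apply/normA_TG => /=; split.
- exact: unitmx1.
- by move=> b Lb; rewrite mul1mx.
- by move=> b Lb; exists b; rewrite ?mul1mx.
Qed.

Definition isoU (U P : 'M[R]_2) := forall w, nrm2 (U *m (P *m w)) = nrm2 (U *m w).

Lemma gen_inv U S f : (forall g, S g -> isoU U (lin g)) ->
  gen_Aff (Mgrp R) S f -> normA (TG Zv) f /\ isoU U (lin f).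
Proof.
move=> hS; rewrite Mgrp_TG.
elim => {f} [f Sf nf | | f g _ [nf isf] _ [ng isg] | f _ [nf isf] | f g _ [nf isf] ng e].
- by split => //; apply: hS.
- by split; [exact: (normA_transl _ 0) | move=> w /=; rewrite mul1mx].
- split; first exact: normA_comp.
  by move=> w /=; rewrite -mulmxA isf isg.
- split; first exact: normA_inv.
  have [u _ _] := (normA_TG _ _).1 nf.
  by move=> w /=; rewrite -[in RHS](mulKVmx u w) isf.
- by split => //; rewrite -(star_eq_lin_M e).
Qed.

Definition tup := (int * int * int * int)%type.
Definition T4 (t : tup) : 'M[R]_2 :=
  let: (a, b, c, d) := t in mx2 a%:~R b%:~R c%:~R d%:~R.
Definition mul4 (t s : tup) : tup :=
  let: (a, b, c, d) := t in let: (a', b', c', d') := s in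
  (a * a' + b * c', a * b' + b * d', c * a' + d * c', c * b' + d * d').
Lemma T4_mul t s : T4 t *m T4 s = T4 (mul4 t s).
Proof.
case: t => [[[a b] c] d]; case: s => [[[a' b'] c'] d'].
by rewrite /= mx2_mul; congr mx2; rewrite intrD !intrM.
Qed.

Definition GA S t := gen_Aff (Mgrp R) S (linaff (T4 t)).
Lemma GA_mul S t s (r : tup) : GA S t -> GA S s -> mul4 t s = r -> GA S r.
Proof. by move=> h1 h2 <-; rewrite /GA -T4_mul -acomp_linaff; apply: ga_comp. Qed.

Lemma T4_Zv t z : Zv z -> Zv (T4 t *m z).
Proof.
case: t => [[[a b] c] d] /Zv_ints [k [l ->]].
by rewrite /= mx2_vec2 Zv2 !rpredD ?rpredM ?intr_int.
Qed.

Lemma normA_self P : P *m P = 1%:M -> (forall z, Zv z -> Zv (P *m z)) ->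
  normA (TG Zv) (linaff P).
Proof.
move=> PP hP; apply/normA_TG => /=; split => //.
- by case: (mulmx1_unit PP).
- by move=> a La; exists (P *m a); [exact: hP | rewrite mulmxA PP mul1mx].
Qed.

Lemma T4A : T4 (-1, 0, 0, 1)%R = Amx R.
Proof. by rewrite /T4 /Amx. Qed.
Lemma T4B : T4 (-1, 1, 0, 1)%R = Bmx R.
Proof. by rewrite /T4 /Bmx. Qed.
Lemma T4C : T4 (0, 1, 1, 0)%R = Cmx R.
Proof. by rewrite /T4 /Cmx. Qed.
Lemma GA_M S (a b c d : int) : GA S (-1, 0, 0, 1)%R -> GA S (0, 1, 1, 0)%R ->
  (a * a + c * c = 1)%R -> (b * b + d * d = 1)%R -> ((a + b) * (a + b) + (c + d) * (c + d) = 2)%R -> GA S (a, b, c, d).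
Proof.
move=> g0 g1 h1 h2 h3.
have ha : (a = 0 \/ a = 1 \/ a = -1)%R by nia.
have hb : (b = 0 \/ b = 1 \/ b = -1)%R by nia.
have hc : (c = 0 \/ c = 1 \/ c = -1)%R by nia.
have hd : (d = 0 \/ d = 1 \/ d = -1)%R by nia.
have w0 : GA S (-1, 0, 0, 1)%R := g0.
have w1 : GA S (0, 1, 1, 0)%R := g1.
have w2 : GA S (1, 0, 0, 1)%R := GA_mul w0 g0 erefl.
have w3 : GA S (0, -1, 1, 0)%R := GA_mul w0 g1 erefl.
have w4 : GA S (0, 1, -1, 0)%R := GA_mul w1 g0 erefl.
have w5 : GA S (0, -1, -1, 0)%R := GA_mul w3 g0 erefl.
have w6 : GA S (1, 0, 0, -1)%R := GA_mul w4 g1 erefl.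
have w7 : GA S (-1, 0, 0, -1)%R := GA_mul w5 g1 erefl.
clear -ha hb hc hd h1 h2 h3 w0 w1 w2 w3 w4 w5 w6 w7.
move: h1 h2 h3.
case: ha => [->|[->|->]]; case: hb => [->|[->|->]]; case: hc => [->|[->|->]]; case: hd => [->|[->|->]];
  move=> h1 h2 h3; first [assumption | exfalso; lia].
Qed.

Lemma GA_H S (a b c d : int) : GA S (-1, 1, 0, 1)%R -> GA S (0, 1, 1, 0)%R ->
  (a * a - a * c + c * c = 1)%R -> (b * b - b * d + d * d = 1)%R -> ((a + b) * (a + b) - (a + b) * (c + d) + (c + d) * (c + d) = 1)%R -> GA S (a, b, c, d).
Proof.
move=> g0 g1 h1 h2 h3.
have ha : (a = 0 \/ a = 1 \/ a = -1)%R by nia.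
have hb : (b = 0 \/ b = 1 \/ b = -1)%R by nia.
have hc : (c = 0 \/ c = 1 \/ c = -1)%R by nia.
have hd : (d = 0 \/ d = 1 \/ d = -1)%R by nia.
have w0 : GA S (-1, 1, 0, 1)%R := g0.
have w1 : GA S (0, 1, 1, 0)%R := g1.
have w2 : GA S (1, 0, 0, 1)%R := GA_mul w0 g0 erefl.
have w3 : GA S (1, -1, 1, 0)%R := GA_mul w0 g1 erefl.
have w4 : GA S (0, 1, -1, 1)%R := GA_mul w1 g0 erefl.
have w5 : GA S (-1, 0, -1, 1)%R := GA_mul w3 g0 erefl.
have w6 : GA S (1, 0, 1, -1)%R := GA_mul w4 g1 erefl.
have w7 : GA S (0, -1, 1, -1)%R := GA_mul w5 g1 erefl.
have w8 : GA S (-1, 1, -1, 0)%R := GA_mul w6 g0 erefl.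
have w9 : GA S (0, -1, -1, 0)%R := GA_mul w7 g0 erefl.
have w10 : GA S (1, -1, 0, -1)%R := GA_mul w8 g1 erefl.
have w11 : GA S (-1, 0, 0, -1)%R := GA_mul w9 g1 erefl.
clear -ha hb hc hd h1 h2 h3 w0 w1 w2 w3 w4 w5 w6 w7 w8 w9 w10 w11.
move: h1 h2 h3.
case: ha => [->|[->|->]]; case: hb => [->|[->|->]]; case: hc => [->|[->|->]]; case: hd => [->|[->|->]];
  move=> h1 h2 h3; first [assumption | exfalso; lia].
Qed.

Lemma app_Daff x : app (Daff R) x = Dmx R *m x.
Proof. by rewrite /Daff app_linaff. Qed.
Lemma app_ainvD x : app (ainv (Daff R)) x = invmx (Dmx R) *m x.
Proof. by rewrite /app /= mulmx0 oppr0 add0r. Qed.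
Lemma app_Dsharp phi x :
  app (Dsharp phi) x = Dmx R *m app phi (invmx (Dmx R) *m x).
Proof. by rewrite /Dsharp !app_acomp app_Daff app_ainvD. Qed.
Lemma lin_Dsharp phi : lin (Dsharp phi) = Dmx R *m (lin phi *m invmx (Dmx R)).
Proof. by []. Qed.

Lemma part2 : conj_eq (Daff R) (Mgrp R) (Lgrp R).
Proof.
rewrite Mgrp_TG Lgrp_TG; split.
  move=> _ [z Zz <-]; rewrite conj_transl; last exact: Dunit.
  by exists (Dmx R *m z) => //; exists z.
move=> _ [_ [z Zz <-] <-]; exists (transl z); first by exists z.
by rewrite conj_transl //; exact: Dunit.
Qed.

Lemma part3a phi : normA (Mgrp R) phi -> normA (Lgrp R) (Dsharp phi).
Proof.
rewrite Mgrp_TG Lgrp_TG => /normA_TG [u p s]; apply/normA_TG; rewrite lin_Dsharp.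
have uD := Dunit; split.
- by rewrite !unitmx_mul u unitmx_inv uD.
- move=> _ [z Zz <-]; rewrite -!mulmxA mulKmx //.
  by exists (lin phi *m z) => //; exact: p.
- move=> _ [z Zz <-]; have [z' Zz' ->] := s z Zz.
  by exists (Dmx R *m z'); [exists z' | rewrite -!mulmxA mulKmx].
Qed.

Lemma part3b phi psi :
  star_eq (Mgrp R) phi psi <-> star_eq (Lgrp R) (Dsharp phi) (Dsharp psi).
Proof.
rewrite Mgrp_TG Lgrp_TG (star_eq_TG _ _ latc_Zv) (star_eq_TG _ _ latc_LL).
split => h x.
  rewrite !app_Dsharp -mulmxBr; exists (app phi (invmx (Dmx R) *m x) - app psi (invmx (Dmx R) *m x)) => //.
case: (h (Dmx R *m x)) => z Zz; rewrite !app_Dsharp mulKmx; last exact: Dunit.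
rewrite -mulmxBr => e; have := congr1 (mulmx (invmx (Dmx R))) e.
by rewrite !mulKmx ?Dunit // => <-.
Qed.

Lemma part3c phi psi :
  star_eq (Lgrp R) (Dsharp (acomp phi psi)) (acomp (Dsharp phi) (Dsharp psi)).
Proof.
apply: star_eq_app => x.
by rewrite app_acomp !app_Dsharp app_acomp mulKmx //; exact: Dunit.
Qed.

Lemma part3d chi : normA (Lgrp R) chi ->
  exists2 phi, normA (Mgrp R) phi & star_eq (Lgrp R) (Dsharp phi) chi.
Proof.
move=> nchi; have uD := Dunit.
exists (acomp (ainv (Daff R)) (acomp chi (Daff R))).
  move: nchi; rewrite Mgrp_TG Lgrp_TG => /normA_TG [u p s]; apply/normA_TG => /=.
  split.
  - by rewrite !unitmx_mul unitmx_inv uD u.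
  - move=> z Zz; have [z' Zz' e] := p (Dmx R *m z) (ex_intro2 _ _ z Zz erefl).
    by rewrite -!mulmxA -e mulKmx.
  - move=> z Zz; have [_ [z' Zz' <-] e] := s (Dmx R *m z) (ex_intro2 _ _ z Zz erefl).
    by exists z' => //; rewrite -!mulmxA -e mulKmx.
apply: star_eq_app => x.
by rewrite app_Dsharp !app_acomp app_ainvD app_Daff !mulKVmx.
Qed.

Lemma int_mx P : (forall z, Zv z -> Zv (P *m z)) -> exists t, P = T4 t.
Proof.
move=> hP.
have Z10 : Zv (vec2 1 0) by rewrite Zv2 rpred1 rpred0.
have Z01 : Zv (vec2 0 1) by rewrite Zv2 rpred1 rpred0.
have e1 : P *m vec2 1 0 = vec2 (P 0 0) (P 1 0).
  by rewrite {1}(mx_eta P) mx2_vec2; congr vec2; ring.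
have e2 : P *m vec2 0 1 = vec2 (P 0 1) (P 1 1).
  by rewrite {1}(mx_eta P) mx2_vec2; congr vec2; ring.
have := hP _ Z10; rewrite e1 => /Zv2 [/intrP [a ha] /intrP [c hc]].
have := hP _ Z01; rewrite e2 => /Zv2 [/intrP [b hb] /intrP [d hd]].
by exists (a, b, c, d); rewrite /= {1}(mx_eta P) ha hb hc hd.
Qed.

Lemma T4_vec2 (a b c d : int) (x y : R) :
  T4 (a, b, c, d) *m vec2 x y = vec2 (a%:~R * x + b%:~R * y) (c%:~R * x + d%:~R * y).
Proof. by rewrite /= mx2_vec2. Qed.

Lemma int_eq (m n : int) : (m%:~R : R) = n%:~R -> m = n.
Proof. exact: intr_inj. Qed.

Lemma cons_M (a b c d : int) : (forall w, nrm2 (T4 (a, b, c, d) *m w) = nrm2 w) ->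
  [/\ (a * a + c * c = 1)%R, (b * b + d * d = 1)%R &
      ((a + b) * (a + b) + (c + d) * (c + d) = 2)%R].
Proof.
move=> iso; split; apply: (@int_eq); rewrite ?intrD !intrM ?intrD.
- by move: (iso (vec2 1 0)); rewrite T4_vec2 !nrm2_vec2 => h; rewrite (_ : 1%:~R = 1) //; nra.
- by move: (iso (vec2 0 1)); rewrite T4_vec2 !nrm2_vec2 => h; rewrite (_ : 1%:~R = 1) //; nra.
- by move: (iso (vec2 1 1)); rewrite T4_vec2 !nrm2_vec2 => h; rewrite [RHS](_ : _ = 2) //; nra.
Qed.

Lemma cons_H (a b c d : int) :
  (forall w, nrm2 (Dmx R *m (T4 (a, b, c, d) *m w)) = nrm2 (Dmx R *m w)) ->
  [/\ (a * a - a * c + c * c = 1)%R, (b * b - b * d + d * d = 1)%R &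
      ((a + b) * (a + b) - (a + b) * (c + d) + (c + d) * (c + d) = 1)%R].
Proof.
move=> iso; split; apply: (@int_eq); rewrite ?intrD ?intrB !intrM ?intrD ?intrB.
- by move: (iso (vec2 1 0)); rewrite T4_vec2 !nrm2_D => h; rewrite (_ : 1%:~R = 1) //; nra.
- by move: (iso (vec2 0 1)); rewrite T4_vec2 !nrm2_D => h; rewrite (_ : 1%:~R = 1) //; nra.
- by move: (iso (vec2 1 1)); rewrite T4_vec2 !nrm2_D => h; rewrite (_ : 1%:~R = 1) //; nra.
Qed.

Lemma T4I : T4 (1, 0, 0, 1)%R = 1%:M.
Proof. by rewrite mx21. Qed.

Lemma nA : normA (Mgrp R) (linaff (Amx R)).
Proof.
rewrite Mgrp_TG -T4A; apply: normA_self; last exact: T4_Zv.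
by rewrite T4_mul -T4I.
Qed.
Lemma nB : normA (Mgrp R) (linaff (Bmx R)).
Proof.
rewrite Mgrp_TG -T4B; apply: normA_self; last exact: T4_Zv.
by rewrite T4_mul -T4I.
Qed.
Lemma nC : normA (Mgrp R) (linaff (Cmx R)).
Proof.
rewrite Mgrp_TG -T4C; apply: normA_self; last exact: T4_Zv.
by rewrite T4_mul -T4I.
Qed.
Lemma nK a : normA (Mgrp R) (transl a).
Proof. by rewrite Mgrp_TG; apply: normA_transl. Qed.

Lemma part1 phi : normA (Mgrp R) phi ->
  (in_Sym (Mgrp R) phi <->
   gen_Aff (Mgrp R) (Kset R `|` [set linaff (Amx R); linaff (Cmx R)]) phi).
Proof.
move=> nphi; set S := (Kset R `|` _).
have GAA : GA S (-1, 0, 0, 1)%R by rewrite /GA T4A; apply: ga_base; [right; left | exact: nA].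
have GAC : GA S (0, 1, 1, 0)%R by rewrite /GA T4C; apply: ga_base; [right; right | exact: nC].
have hS : forall g, S g -> isoU 1%:M (lin g).
  move=> g [[a _ <-] | [-> | ->]] w; rewrite /= !mul1mx //.
    by rewrite (vec_eta w) /Amx mx2_vec2 !nrm2_vec2; ring.
  by rewrite (vec_eta w) /Cmx mx2_vec2 !nrm2_vec2; ring.
split.
  move=> [_ si]; have nphi' := nphi; rewrite Mgrp_TG in nphi' si.
  have iso := star_iso latc_Zv minnorm_Zv si.
  have [u p s] := (normA_TG _ _).1 nphi'.
  have [[[[a b] c] d] et] := int_mx p.
  have [h1 h2 h3] : [/\ (a * a + c * c = 1)%R, (b * b + d * d = 1)%R &
      ((a + b) * (a + b) + (c + d) * (c + d) = 2)%R].
    by apply: cons_M => w; rewrite -et.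
  have G := GA_M GAA GAC h1 h2 h3.
  apply: (ga_eq (f := acomp (transl (tr phi)) (linaff (T4 (a, b, c, d))))) => //.
    apply: ga_comp => //; apply: ga_base; [by left; exists (tr phi) | exact: nK].
  by apply: star_eq_app => x; rewrite app_acomp app_transl app_linaff /app et.
move=> hg; split => //.
have [_ isoU1] := gen_inv hS hg.
rewrite Mgrp_TG in nphi *; apply: (iso_star latc_Zv _ nphi) => w.
by have := isoU1 w; rewrite !mul1mx.
Qed.

Lemma part4 chi : normA (Lgrp R) chi ->
  (in_Sym (Lgrp R) chi <->
   exists2 phi, gen_Aff (Mgrp R) (Kset R `|` [set linaff (Bmx R); linaff (Cmx R)]) phi
                & star_eq (Lgrp R) (Dsharp phi) chi).
Proof.
move=> nchi; set S := (Kset R `|` _); have uD := Dunit.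
have GAB : GA S (-1, 1, 0, 1)%R by rewrite /GA T4B; apply: ga_base; [right; left | exact: nB].
have GAC : GA S (0, 1, 1, 0)%R by rewrite /GA T4C; apply: ga_base; [right; right | exact: nC].
have hS : forall g, S g -> isoU (Dmx R) (lin g).
  move=> g [[a _ <-] | [-> | ->]] w; rewrite /= ?mul1mx //.
    by rewrite (vec_eta w) /Bmx mx2_vec2 !nrm2_D; ring.
  by rewrite (vec_eta w) /Cmx mx2_vec2 !nrm2_D; ring.
split.
  move=> [_ si]; have nchi' := nchi; rewrite Lgrp_TG in nchi' si.
  have iso := star_iso latc_LL minnorm_LL si.
  have [u p s] := (normA_TG _ _).1 nchi'.
  set Q := lin chi in iso p s.
  set P := invmx (Dmx R) *m (Q *m Dmx R).
  have hP : forall z, Zv z -> Zv (P *m z).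
    move=> z Zz; have [z' Zz' e] := p _ (ex_intro2 _ _ z Zz erefl).
    by rewrite /P -!mulmxA -e mulKmx.
  have [[[[a b] c] d] et] := int_mx hP.
  have isoP : forall w, nrm2 (Dmx R *m (T4 (a, b, c, d) *m w)) = nrm2 (Dmx R *m w).
    by move=> w; rewrite -et /P -!mulmxA mulKVmx // iso.
  have [h1 h2 h3] := cons_H isoP.
  have G := GA_H GAB GAC h1 h2 h3.
  exists (acomp (transl (invmx (Dmx R) *m tr chi)) (linaff (T4 (a, b, c, d)))).
    apply: ga_comp => //; apply: ga_base; [by left; eexists | exact: nK].
  apply: star_eq_app => x; rewrite app_Dsharp app_acomp app_transl app_linaff -et /P.
  by rewrite mulmxDr -!mulmxA !mulKVmx.
move=> [phi hg e]; split => //.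
have [_ isoP] := gen_inv hS hg.
rewrite Lgrp_TG in nchi e *; have el := star_eq_lin_L e.
apply: (iso_star latc_LL _ nchi) => w.
by rewrite -el lin_Dsharp -!mulmxA isoP mulKVmx.
Qed.
End S.

Theorem lemma30 (R : realType) :
  (* Sym(M) = < K, A_*, C_* > *)
  (forall phi : aff R, normA (Mgrp R) phi ->
     (in_Sym (Mgrp R) phi <->
      gen_Aff (Mgrp R) (Kset R `|` [set linaff (Amx R); linaff (Cmx R)]) phi)) /\
  (* D M D^{-1} = Lambda *)
  conj_eq (Daff R) (Mgrp R) (Lgrp R) /\
  (* D_sharp : Aff(M) -> Aff(Lambda) is a well-defined isomorphism *)
  ((forall phi, normA (Mgrp R) phi -> normA (Lgrp R) (Dsharp phi)) /\
   (forall phi psi, normA (Mgrp R) phi -> normA (Mgrp R) psi ->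
      (star_eq (Mgrp R) phi psi <-> star_eq (Lgrp R) (Dsharp phi) (Dsharp psi))) /\
   (forall phi psi, normA (Mgrp R) phi -> normA (Mgrp R) psi ->
      star_eq (Lgrp R) (Dsharp (acomp phi psi)) (acomp (Dsharp phi) (Dsharp psi))) /\
   (forall chi, normA (Lgrp R) chi ->
      exists2 phi, normA (Mgrp R) phi & star_eq (Lgrp R) (Dsharp phi) chi)) /\
  (* Sym(Lambda) = D_sharp(< K, B_*, C_* >) *)
  (forall chi : aff R, normA (Lgrp R) chi ->
     (in_Sym (Lgrp R) chi <->
      exists2 phi, gen_Aff (Mgrp R) (Kset R `|` [set linaff (Bmx R); linaff (Cmx R)]) phi
                   & star_eq (Lgrp R) (Dsharp phi) chi)).
Proof.
split; first exact: part1.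
split; first exact: part2.
split; last exact: part4.
split; first exact: part3a.
split; first by move=> phi psi _ _; exact: part3b.
split; first by move=> phi psi _ _; exact: part3c.
exact: part3d.
Qed.
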